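(* Let $f,g\in\mathcal{H}$ and let $\alpha>0$ be real. Then the germ of $x\mapsto f(x)^{\alpha g(x)}=\exp\big(\alpha\, g(x)\ln f(x)\big)$ belongs to $\mathcal{H}$.
   Context: All functions are real-valued functions defined on some interval $(a,\infty)$. Two such functions are identified if they agree for all sufficiently large $x$; these equivalence classes are germs at $+\infty$. Write $\ln^{(k)}$ for the $k$-fold iterated natural logarithm, with $\ln^{(0)}(x)=x$. Let $\mathcal{H}$ be the smallest set of germs at $+\infty$ satisfying: (i) $\ln^{(k)}\in\mathcal{H}$ for every integer $k\ge0$; (ii) if $f\in\mathcal{H}$, then $\exp\circ f\in\mathcal{H}$, and if moreover $f$ is eventually positive, then $f^\alpha\in\mathcal{H}$ for every real $\alpha>0$; (iii) if $f,g\in\mathcal{H}$ and $f\ne g$ (as germs), then $fg\in\mathcal{H}$; (iv) if $f,g\in\mathcal{H}$ and $f(x)/g(x)\to+\infty$, then $f/g\in\mathcal{H}$. (Every element of $\mathcal{H}$ tends to $+\infty$, so $\ln f$ is eventually defined.) *)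

(* Defs.v *)
From Stdlib Require Import Reals.
Open Scope R_scope.

(* Germs at +infinity are represented by total functions R -> R; two
   functions have the same germ iff they agree for all sufficiently large x. *)
Definition germ_eq (f g : R -> R) : Prop :=
  exists a : R, forall x : R, a < x -> f x = g x.

Definition eventually_pos (f : R -> R) : Prop :=
  exists a : R, forall x : R, a < x -> 0 < f x.

Definition tends_to_infty (f : R -> R) : Prop :=
  forall M : R, exists a : R, forall x : R, a < x -> M < f x.

Fixpoint iter_ln (k : nat) (x : R) : R :=
  match k with
  | O => x
  | S k' => ln (iter_ln k' x)
  end.

(* The smallest set of germs closed under (i)-(iv); membership of a function
   means membership of its germ, hence the closure constructor H_germ. *)
Inductive H : (R -> R) -> Prop :=
  | H_germ : forall f g, H f -> germ_eq f g -> H g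
  | H_ln : forall k : nat, H (iter_ln k)
  | H_exp : forall f, H f -> H (fun x => exp (f x))
  | H_pow : forall f (alpha : R), H f -> eventually_pos f -> 0 < alpha ->
      H (fun x => Rpower (f x) alpha)
  | H_mul : forall f g, H f -> H g -> ~ germ_eq f g -> H (fun x => f x * g x)
  | H_div : forall f g, H f -> H g -> tends_to_infty (fun x => f x / g x) ->
      H (fun x => f x / g x).

(* Main.v *)
Require Import Defs.
From Stdlib Require Import Reals Lra Classical.
Open Scope R_scope.

Lemma exp_big (y M : R) : Rabs M < y -> M < exp y.
Proof.
  intros Hy. assert (0 <= Rabs M) by apply Rabs_pos.
  assert (1 + y < exp y) by (apply exp_ineq1; lra).
  assert (M <= Rabs M) by apply RRle_abs. lra.
Qed.

Lemma ln_big (y L : R) : exp L < y -> L < ln y.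
Proof.
  intros Hy. rewrite <- (ln_exp L) at 1. apply ln_increasing; auto. apply exp_pos.
Qed.

Lemma iter_ln_infty k : tends_to_infty (iter_ln k).
Proof.
  induction k as [|k IH]; intros M.
  - exists M; simpl; auto.
  - destruct (IH (exp M)) as [a Ha]. exists a. intros x Hx. simpl. apply ln_big. auto.
Qed.

Lemma H_infty f : H f -> tends_to_infty f.
Proof.
  induction 1 as [f g _ IH [b Hb]|k|f _ IH|f al _ IH _ Hal|f g _ IHf _ IHg _|f g _ _ _ _ Ht].
  - intros M. destruct (IH M) as [a Ha]. exists (Rmax a b). intros x Hx.
    rewrite <- Hb. apply Ha. pose proof (Rmax_l a b). lra. pose proof (Rmax_r a b). lra.
  - apply iter_ln_infty.
  - intros M. destruct (IH (Rabs M)) as [a Ha]. exists a. intros x Hx. apply exp_big. auto.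
  - intros M. destruct (IH (exp (Rabs M / al))) as [a Ha]. exists a. intros x Hx.
    unfold Rpower. apply exp_big.
    assert (Rabs M / al < ln (f x)) by (apply ln_big; auto).
    assert (Rabs M = al * (Rabs M / al)) by (field; lra).
    assert (al * (Rabs M / al) < al * ln (f x)) by (apply Rmult_lt_compat_l; auto).
    lra.
  - intros M. destruct (IHf (Rabs M + 1)) as [a Ha]. destruct (IHg 1) as [b Hb].
    exists (Rmax a b). intros x Hx.
    assert (Hf := Ha x ltac:(pose proof (Rmax_l a b); lra)).
    assert (Hg := Hb x ltac:(pose proof (Rmax_r a b); lra)).
    pose proof (RRle_abs M). pose proof (Rabs_pos M). nra.
  - exact Ht.
Qed.

Lemma ev_pos f : H f -> eventually_pos f.
Proof. intros Hf. destruct (H_infty f Hf 0) as [a Ha]. exists a. auto. Qed.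

Lemma mulH A B : H A -> H B -> H (fun x => A x * B x).
Proof.
  intros HA HB. destruct (classic (germ_eq A B)) as [[b Hb]|Hn].
  - destruct (ev_pos A HA) as [a Ha].
    apply H_germ with (fun x => Rpower (A x) (INR 2)).
    + apply H_pow; auto. apply ev_pos; auto. simpl; lra.
    + exists (Rmax a b). intros x Hx. rewrite Rpower_pow.
      rewrite <- Hb. simpl. ring. pose proof (Rmax_r a b). lra.
      apply Ha. pose proof (Rmax_l a b). lra.
  - apply H_mul; auto.
Qed.

Lemma expscale A al : H A -> 0 < al -> H (fun x => exp (al * A x)).
Proof.
  intros HA Hal. apply H_germ with (fun x => Rpower (exp (A x)) al).
  - apply H_pow; auto. apply H_exp; auto. exists 0. intros; apply exp_pos.
  - exists 0. intros x _. unfold Rpower. rewrite ln_exp. reflexivity.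
Qed.

Lemma P f : H f -> forall g al, H g -> 0 < al ->
  H (fun x => exp (al * g x * ln (f x))).
Proof.
  induction 1 as [f f' _ IH [b Hb]|k|f Hf IH|f be Hf IH _ Hbe|f1 f2 H1 IH1 H2 IH2 _|f1 f2 H1 IH1 H2 IH2 Ht];
    intros g al Hg Hal.
  - apply H_germ with (fun x => exp (al * g x * ln (f x))); auto.
    exists b. intros x Hx. rewrite Hb; auto.
  - apply H_germ with (fun x => exp (al * (g x * iter_ln (S k) x))).
    + apply expscale; auto. apply mulH; auto. apply H_ln.
    + exists 0. intros. simpl. f_equal. ring.
  - apply H_germ with (fun x => exp (al * (g x * f x))).
    + apply expscale; auto. apply mulH; auto.
    + exists 0. intros. rewrite ln_exp. f_equal. ring.
  - apply H_germ with (fun x => exp ((al * be) * g x * ln (f x))).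
    + apply IH; auto. nra.
    + exists 0. intros. unfold Rpower. rewrite ln_exp. f_equal. ring.
  - destruct (ev_pos _ H1) as [a1 Ha1]. destruct (ev_pos _ H2) as [a2 Ha2].
    apply H_germ with (fun x => exp (al * g x * ln (f1 x)) * exp (al * g x * ln (f2 x))).
    + apply mulH; auto.
    + exists (Rmax a1 a2). intros x Hx. rewrite ln_mult. rewrite <- exp_plus. f_equal. ring.
      apply Ha1. pose proof (Rmax_l a1 a2). lra. apply Ha2. pose proof (Rmax_r a1 a2). lra.
  - destruct (ev_pos _ H1) as [a1 Ha1]. destruct (ev_pos _ H2) as [a2 Ha2].
    assert (Heq : forall x, Rmax a1 a2 < x ->
      exp (al * g x * ln (f1 x)) / exp (al * g x * ln (f2 x)) = exp (al * g x * ln (f1 x / f2 x))).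
    { intros x Hx. assert (0 < f1 x) by (apply Ha1; pose proof (Rmax_l a1 a2); lra).
      assert (0 < f2 x) by (apply Ha2; pose proof (Rmax_r a1 a2); lra).
      unfold Rdiv. rewrite ln_mult, ln_Rinv, <- exp_Ropp, <- exp_plus; auto.
      f_equal. ring. apply Rinv_0_lt_compat; auto. }
    apply H_germ with (fun x => exp (al * g x * ln (f1 x)) / exp (al * g x * ln (f2 x))).
    + apply H_div; auto.
      intros M. destruct (Ht (exp (Rabs M / al))) as [a Ha].
      destruct (H_infty g Hg 1) as [b Hb].
      exists (Rmax (Rmax a1 a2) (Rmax a b)). intros x Hx.
      pose proof (Rmax_l (Rmax a1 a2) (Rmax a b)). pose proof (Rmax_r (Rmax a1 a2) (Rmax a b)).
      pose proof (Rmax_l a b). pose proof (Rmax_r a b).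
      rewrite Heq by lra. apply exp_big.
      assert (HL : Rabs M / al < ln (f1 x / f2 x)) by (apply ln_big; apply Ha; lra).
      assert (Hg1 : 1 < g x) by (apply Hb; lra).
      assert (Rabs M = al * (Rabs M / al)) by (field; lra).
      assert (0 <= Rabs M / al) by (apply Rmult_le_pos; [apply Rabs_pos| left; apply Rinv_0_lt_compat; auto]).
      assert (Rabs M / al < g x * ln (f1 x / f2 x)) by nra.
      assert (al * (Rabs M / al) < al * (g x * ln (f1 x / f2 x))) by (apply Rmult_lt_compat_l; auto).
      replace (al * g x * ln (f1 x / f2 x)) with (al * (g x * ln (f1 x / f2 x))) by ring. lra.
    + exists (Rmax a1 a2). intros x Hx. apply Heq; auto.
Qed.

Theorem mainTheorem5 (f g : R -> R) (alpha : R) :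
  H f -> H g -> 0 < alpha ->
  H (fun x => exp (alpha * g x * ln (f x))).
Proof.
  intros Hf Hg Ha. apply P; auto.
Qed.
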